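(* Let $S$ be a scheme on $X$, $\mathbb F$ a field, $x\in X$, $E_a^*=E_a^*(x)$, and let $R_i,R_j,R_\ell,R_m\in S$. If $R_{i'}R_\ell=\{R_j\}$, then $E_i^*A_mE_\ell^*\neq O$ if and only if $m=j$; moreover $E_i^*A_jE_\ell^*=E_i^*JE_\ell^*$. In particular, if $k_i=1$ or $k_\ell=1$, then there is a unique $R_n\in S$ with $E_i^*A_nE_\ell^*\neq O$, and $E_i^*A_nE_\ell^*=E_i^*JE_\ell^*$.
   Context: Let $X$ be a nonempty finite set. A scheme of class $d$ on $X$ is a partition $S=\{R_0,\dots,R_d\}$ of $X\times X$ into nonempty sets such that $R_0=\{(b,b):b\in X\}$; for each $c$ there is $c'$ with $R_{c'}=\{(f,e):(e,f)\in R_c\}$; and for all $i,j,k$ the intersection number $p_{ij}^k=|\{\ell\in X:(m,\ell)\in R_i,(\ell,n)\in R_j\}|$ does not depend on $(m,n)\in R_k$. The valency is $k_a=p_{aa'}^0$; the complex product is $R_aR_b=\{R_c\in S:p_{ab}^c>0\}$. For $y\in X$, $yR_a=\{z:(y,z)\in R_a\}$. $A_a\in M_X(\mathbb F)$ is the $(0,1)$ adjacency matrix of $R_a$, $E_a^*(y)$ is the diagonal $(0,1)$-matrix with ones exactly at positions indexed by $yR_a$, $J$ is the all-ones matrix and $O$ the zero matrix. *)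

(* Defs.v *)
From HB Require Import structures.
From mathcomp Require Import all_boot all_order all_algebra.
Set Implicit Arguments. Unset Strict Implicit. Unset Printing Implicit Defensive.
Import GRing.Theory.
Local Open Scope ring_scope.

(* A scheme of class d on a finite set X is encoded by a function
   r : X -> X -> 'I_d.+1 sending (e,f) to the index c of the unique
   relation R_c containing (e,f); so R_c = {(e,f) | r e f = c}. *)

Definition pcount (X : finType) (d : nat) (r : X -> X -> 'I_d.+1)
  (a b : 'I_d.+1) (m n : X) : nat :=
  #|[set l : X | (r m l == a) && (r l n == b)]|.

Definition is_scheme (X : finType) (d : nat) (r : X -> X -> 'I_d.+1) : Prop :=
  [/\ (exists y : X, True),
      (forall c : 'I_d.+1, exists e f, r e f = c),
      (forall e f, r e f = ord0 <-> e = f),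
      (forall c : 'I_d.+1, exists c' : 'I_d.+1, forall e f, r f e = c' <-> r e f = c) &
      (forall a b k : 'I_d.+1, forall m n m2 n2 : X,
          r m n = k -> r m2 n2 = k -> pcount r a b m n = pcount r a b m2 n2)].

Definition trans (X : finType) (d : nat) (r : X -> X -> 'I_d.+1) (c : 'I_d.+1)
  : 'I_d.+1 :=
  odflt c [pick c' : 'I_d.+1 | [forall e, forall f, (r f e == c') == (r e f == c)]].

(* intersection number p_ab^c (computed at some pair of R_c; 0 if R_c empty) *)
Definition pnum (X : finType) (d : nat) (r : X -> X -> 'I_d.+1) (a b c : 'I_d.+1)
  : nat :=
  match [pick mn : X * X | r mn.1 mn.2 == c] with
  | Some mn => pcount r a b mn.1 mn.2
  | None => 0%N
  end.

Definition valency (X : finType) (d : nat) (r : X -> X -> 'I_d.+1) (a : 'I_d.+1)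
  : nat := pnum r a (trans r a) ord0.

Definition cprod (X : finType) (d : nat) (r : X -> X -> 'I_d.+1) (a b : 'I_d.+1)
  : {set 'I_d.+1} := [set c | (0 < pnum r a b c)%N].

(* Matrices in M_X(F): rows/columns indexed by 'I_#|X| via enum_val. *)
Definition adjm (F : fieldType) (X : finType) (d : nat) (r : X -> X -> 'I_d.+1)
  (a : 'I_d.+1) : 'M[F]_#|X| :=
  \matrix_(i, j) (r (enum_val i) (enum_val j) == a)%:R.

Definition Estar (F : fieldType) (X : finType) (d : nat) (r : X -> X -> 'I_d.+1)
  (y : X) (a : 'I_d.+1) : 'M[F]_#|X| :=
  \matrix_(i, j) ((i == j) && (r y (enum_val i) == a))%:R.

Definition Jmx (F : fieldType) (X : finType) : 'M[F]_#|X| := const_mx 1.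

(* Main.v *)
Require Import Defs.
From HB Require Import structures.
From mathcomp Require Import all_boot all_order all_algebra.
Import GRing.Theory.
Local Open Scope ring_scope.
Set Implicit Arguments. Unset Strict Implicit.

Lemma mulE_l (F : fieldType) (X : finType) d (r : X -> X -> 'I_d.+1) y a
  (M : 'M[F]_#|X|) :
  Estar F r y a *m M = \matrix_(i, j) ((r y (enum_val i) == a)%:R * M i j).
Proof.
apply/matrixP => i j; rewrite !mxE (bigD1 i) //= big1 ?addr0.
  by rewrite !mxE eqxx.
by move=> k nk; rewrite !mxE eq_sym (negbTE nk) /= mul0r.
Qed.

Lemma mulE_r (F : fieldType) (X : finType) d (r : X -> X -> 'I_d.+1) y a
  (M : 'M[F]_#|X|) :
  M *m Estar F r y a = \matrix_(i, j) (M i j * (r y (enum_val j) == a)%:R).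
Proof.
apply/matrixP => i j; rewrite !mxE (bigD1 j) //= big1 ?addr0.
  by rewrite !mxE eqxx.
by move=> k nk; rewrite !mxE (negbTE nk) /= mulr0.
Qed.

Lemma trans_spec (X : finType) d (r : X -> X -> 'I_d.+1) (c : 'I_d.+1) :
  is_scheme r -> forall e f, r f e = trans r c <-> r e f = c.
Proof.
case=> _ _ _ Ht _; rewrite /trans; case: pickP => [c' /= /forallP H | H].
  move=> e f; move: (H e) => /forallP /(_ f) /eqP H'.
  split; [move/eqP; rewrite H' => /eqP // | move/eqP; rewrite -H' => /eqP //].
exfalso; case: (Ht c) => c' Hc'.
have := H c' => /= /negbT /negP; apply; apply/forallP => e; apply/forallP => f.
apply/eqP; apply/idP/idP.
  by move/eqP/(Hc' e f)/eqP.
by move/eqP/(Hc' e f).2/eqP.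
Qed.

Lemma xR_nonempty (X : finType) d (r : X -> X -> 'I_d.+1) :
  is_scheme r -> forall x a, exists p, r x p = a.
Proof.
move=> Hs; have [_ Hne H0 _ Hp] := Hs; move=> x a.
case: (Hne a) => e [f ef].
have: (0 < pcount r a (trans r a) e e)%N.
  rewrite /pcount card_gt0; apply/set0Pn; exists f.
  by rewrite inE ef eqxx /=; apply/eqP; apply: (proj2 (trans_spec _ Hs _ _)).
rewrite (Hp a (trans r a) ord0 e e x x); [| by apply/H0 | by apply/H0].
rewrite /pcount card_gt0 => /set0Pn [z]; rewrite inE => /andP [/eqP h _].
by exists z.
Qed.

Lemma val1 (X : finType) d (r : X -> X -> 'I_d.+1) x a :
  is_scheme r -> valency r a = 1%N -> exists p0, forall p, r x p = a -> p = p0.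
Proof.
move=> Hs; have [_ Hne H0 _ Hp] := Hs.
rewrite /valency /pnum; case: pickP => [[e f] /= /eqP ef | H] //.
rewrite (Hp _ _ ord0 e f x x ef (proj2 (H0 x x) erefl)).
rewrite /pcount => /eqP/cards1P [p0 Hp0]; exists p0 => p hp.
have: p \in [set l | (r x l == a) && (r l x == trans r a)].
  by rewrite inE hp eqxx /=; apply/eqP; apply: (proj2 (trans_spec _ Hs _ _)).
by rewrite Hp0 inE => /eqP.
Qed.

Lemma entryE (F : fieldType) (X : finType) d (r : X -> X -> 'I_d.+1) x i l m a b :
  (Estar F r x i *m adjm F r m *m Estar F r x l) a b =
  ((r x (enum_val a) == i) && (r (enum_val a) (enum_val b) == m)
     && (r x (enum_val b) == l))%:R.
Proof.
rewrite mulE_r mulE_l !mxE.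
by do 3 case: eqP => _ /=; rewrite ?(mul1r, mulr1, mul0r, mulr0).
Qed.

Lemma entryJ (F : fieldType) (X : finType) d (r : X -> X -> 'I_d.+1) x i l a b :
  (Estar F r x i *m Jmx F X *m Estar F r x l) a b =
  ((r x (enum_val a) == i) && (r x (enum_val b) == l))%:R.
Proof.
rewrite mulE_r mulE_l !mxE.
by do 2 case: eqP => _ /=; rewrite ?(mul1r, mulr1, mul0r, mulr0).
Qed.

Lemma generic (F : fieldType) (X : finType) d (r : X -> X -> 'I_d.+1) x i l n :
  (exists p, r x p = i) -> (exists q, r x q = l) ->
  (forall p q, r x p = i -> r x q = l -> r p q = n) ->
  (forall m : 'I_d.+1,
        Estar F r x i *m adjm F r m *m Estar F r x l != 0 <-> m = n) /\
     Estar F r x i *m adjm F r n *m Estar F r x l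
       = Estar F r x i *m Jmx F X *m Estar F r x l.
Proof.
move=> [p0 hp0] [q0 hq0] H.
have Mn : Estar F r x i *m adjm F r n *m Estar F r x l
       = Estar F r x i *m Jmx F X *m Estar F r x l.
  apply/matrixP => a b; rewrite entryE entryJ.
  case: (eqVneq (r x (enum_val a)) i) => ha; case: (eqVneq (r x (enum_val b)) l) => hb;
    rewrite /= ?andbF //.
  by rewrite (H _ _ ha hb) !eqxx.
split => //; move=> m; split.
  case: (eqVneq m n) => // hmn; case/negP; apply/eqP/matrixP => a b.
  rewrite entryE mxE.
  case: (eqVneq (r x (enum_val a)) i) => ha; case: (eqVneq (r x (enum_val b)) l) => hb;
    rewrite /= ?andbF //.
  have -> : (r (enum_val a) (enum_val b) == m) = false.
    by rewrite (H _ _ ha hb); apply/negbTE; rewrite eq_sym.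
  by [].
move=> ->; rewrite Mn; apply/eqP => /matrixP /(_ (enum_rank p0) (enum_rank q0)).
rewrite entryJ !enum_rankK hp0 hq0 !eqxx mxE /= => /eqP.
by rewrite oner_eq0.
Qed.

Unset Implicit Arguments.
Theorem lemma3p2 (X : finType) (d : nat) (r : X -> X -> 'I_d.+1)
  (F : fieldType) (x : X) (i l : 'I_d.+1) :
  is_scheme r ->
  (forall j : 'I_d.+1,
     cprod r (trans r i) l = [set j] ->
     (forall m : 'I_d.+1,
        Estar F r x i *m adjm F r m *m Estar F r x l != 0 <-> m = j) /\
     Estar F r x i *m adjm F r j *m Estar F r x l
       = Estar F r x i *m Jmx F X *m Estar F r x l) /\
  (valency r i = 1%N \/ valency r l = 1%N ->
     exists n : 'I_d.+1,
       (forall m : 'I_d.+1,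
          Estar F r x i *m adjm F r m *m Estar F r x l != 0 <-> m = n) /\
       Estar F r x i *m adjm F r n *m Estar F r x l
         = Estar F r x i *m Jmx F X *m Estar F r x l).
Proof.
move=> Hs; have [_ Hne H0 _ Hp] := Hs.
have nei := xR_nonempty Hs x i; have nel := xR_nonempty Hs x l.
split.
  move=> j hc; apply: generic => // p q hp hq.
  have: r p q \in cprod r (trans r i) l.
    rewrite inE /pnum; case: pickP => [[e f] /= /eqP ef | H].
      rewrite (Hp _ _ _ e f p q ef erefl).
      rewrite /pcount card_gt0; apply/set0Pn; exists x.
      by rewrite inE hq eqxx andbT; apply/eqP; apply: (proj2 (trans_spec _ Hs _ _)).
    by have := H (p, q); rewrite /= eqxx.
  by rewrite hc inE => /eqP.
case=> hv.
  have [p0 U] := val1 x Hs hv.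
  have [q0 hq0] := nel.
  exists (r p0 q0); apply: generic => // p q hp hq.
  rewrite (U p hp).
  have: (0 < pcount r i (r p0 q0) x q0)%N.
    rewrite /pcount card_gt0; apply/set0Pn; exists p0.
    have [p1 hp1] := nei; have e1 := U p1 hp1; subst p1.
    by rewrite inE hp1 !eqxx.
  rewrite (Hp _ _ _ x q0 x q hq0 hq) /pcount card_gt0 => /set0Pn [w].
  by rewrite inE => /andP [/eqP /U -> /eqP].
have [q0 U] := val1 x Hs hv.
have [p0 hp0] := nei.
exists (r p0 q0); apply: generic => // p q hp hq.
rewrite (U q hq).
have hx : forall p, r x p = i -> r p x = trans r i.
  by move=> p' h; apply: (proj2 (trans_spec _ Hs _ _)).
have: (0 < pcount r (r p0 q0) (trans r l) p0 x)%N.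
  rewrite /pcount card_gt0; apply/set0Pn; exists q0.
  have [q1 hq1] := nel; have e1 := U q1 hq1; subst q1.
  by rewrite inE eqxx /=; apply/eqP; apply: (proj2 (trans_spec _ Hs _ _)).
rewrite (Hp _ _ _ p0 x p x (hx _ hp0) (hx _ hp)) /pcount card_gt0 => /set0Pn [w].
rewrite inE => /andP [/eqP h1 /eqP /(proj1 (trans_spec _ Hs _ _)) /U e]; by rewrite e in h1.
Qed.
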